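(* Let $T$ be a directed tree with root (source) $\rho$, let $R$ be a finite set of positive integers such that there exists a burning assignment $\phi:R\to V(T)$ with $V(T)=\bigcup_{r\in R}N^+_{r-1}(\phi(r))$, and let $s$ be a sink of $T$ whose distance $d(\rho,s)$ from $\rho$ is maximal among all sinks. Then either $d(\rho,s)\le \max(R)-1$, or there exist a burning assignment $\phi:R\to V(T)$ with $V(T)=\bigcup_{r\in R}N^+_{r-1}(\phi(r))$ and some $r\in R$ such that $\phi(r)$ is the node $v$ on the path from $\rho$ to $s$ with $d(v,s)=r-1$.
   Context: A directed tree is a rooted tree with a single source (the root) whose arcs are all directed away from the root. $d(u,w)$ denotes the directed distance (number of arcs of a shortest directed path) from $u$ to $w$. $N^+_k(v)$ is the set of nodes reachable from $v$ by a directed path with at most $k$ arcs (so $N^+_0(v)=\{v\}$). For a set $R$ of positive integers (burning ranges), a burning assignment is a map $\phi:R\to V(T)$; it burns $T$ if $V(T)=\bigcup_{r\in R}N^+_{r-1}(\phi(r))$. *)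

(* Defs.v *)
From mathcomp Require Import all_boot.
Set Implicit Arguments. Unset Strict Implicit. Unset Printing Implicit Defensive.

Definition directed_tree (T : finType) (e : rel T) (rho : T) : Prop :=
  (forall v, ~~ e v rho) /\
  (forall v, v != rho -> exists! u, e u v) /\
  (forall v, connect e rho v).

Definition reach_within (T : finType) (e : rel T) (k : nat) (v w : T) : Prop :=
  exists p : seq T, [/\ path e v p, last v p = w & size p <= k].

Definition out_ball (T : finType) (e : rel T) (k : nat) (v : T) : T -> Prop :=
  fun w => reach_within e k v w.

Definition dist_is (T : finType) (e : rel T) (u w : T) (k : nat) : Prop :=
  reach_within e k u w /\ (forall j, j < k -> ~ reach_within e j u w).

Definition sink (T : finType) (e : rel T) (s : T) : Prop := forall w, ~~ e s w.

(* phi : R -> V(T) (given as a function nat -> T, only its values on R matter)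
   burns T:  V(T) = \bigcup_{r in R} N^+_{r-1}(phi r). *)
Definition burns (T : finType) (e : rel T) (R : seq nat) (phi : nat -> T) : Prop :=
  forall w : T, exists2 r, r \in R & out_ball e (r - 1) (phi r) w.

(* Main.v *)
Require Import Defs.
From mathcomp Require Import all_boot.
From mathcomp Require Import zify.

Section Aux.
Variables (T : finType) (e : rel T) (rho : T).
Hypothesis Ht : directed_tree e rho.

Lemma pathU p q : path e rho p -> path e rho q -> last rho p = last rho q ->
  size p = size q.
Proof.
case: Ht => Hroot [Hpar _].
elim/last_ind: p q => [|p x IH] q.
  case/lastP: q => [|q y] //= _.
  rewrite rcons_path last_rcons => /andP[_ H] Hy.
  by rewrite -Hy in H; move: (Hroot (last rho q)); rewrite H.
case/lastP: q => [|q y].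
  rewrite rcons_path last_rcons => /andP[_ H] _ /= Hy.
  by first [rewrite Hy in H | rewrite -Hy in H]; move: (Hroot (last rho p)); rewrite H.
rewrite !rcons_path !last_rcons => /andP[Hp Hx] /andP[Hq Hy] Exy.
subst y.
have nx : x != rho by apply/eqP => Ex; rewrite Ex in Hx; move: (Hroot (last rho p)); rewrite Hx.
have [u [_ Hu]] := Hpar x nx.
have E1 := Hu _ Hx. have E2 := Hu _ Hy.
by rewrite !size_rcons (IH q Hp Hq); [| rewrite -E1 -E2].
Qed.
Arguments pathU {p q}.

Lemma path_take p i : path e rho p -> path e rho (take i p).
Proof. by rewrite -{1}(cat_take_drop i p) cat_path => /andP[]. Qed.

Lemma nth_take_last p i : i <= size p -> nth rho (rho :: p) i = last rho (take i p).
Proof.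
move=> Hi; rewrite (last_nth rho) size_takel //.
case: i Hi => [|i] Hi //=.
by rewrite nth_take.
Qed.

Lemma path_bound p : path e rho p -> size p < #|T|.
Proof.
move=> Hp.
have Hu : uniq (rho :: p).
  apply/negPn/negP => /(uniqPn rho) [i [j [Hij Hj Eij]]].
  rewrite /= ltnS in Hj.
  rewrite !nth_take_last // in Eij; last by lia.
  have := pathU (path_take p i Hp) (path_take p j Hp) Eij.
  rewrite !size_takel //; last by lia.
  by move=> E; rewrite E ltnn in Hij.
have := max_card (mem (rho :: p)).
by move/card_uniqP: Hu => ->.
Qed.
Arguments path_bound {p}.

Lemma dist_of_path p w : path e rho p -> last rho p = w -> dist_is e rho w (size p).
Proof.
move=> Hp Hl; split; first by exists p.
move=> j Hj [q [Hq Hlq Hs]].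
have := pathU Hp Hq; rewrite Hl Hlq => /(_ erefl) E.
lia.
Qed.

Lemma dist_size p w k : path e rho p -> last rho p = w -> dist_is e rho w k -> size p = k.
Proof.
move=> Hp Hl [[q [Hq Hlq Hs]] Hno].
have E := pathU Hp Hq; rewrite Hl Hlq in E; have {}E := E erefl.
case: (ltngtP (size p) k) => // H.
- by exfalso; apply: (Hno _ H); exists p.
- lia.
Qed.

Lemma sink_below m : forall w a, path e rho a -> last rho a = w -> #|T| - size a <= m ->
  exists s' q, [/\ sink e s', path e w q & last w q = s'].
Proof.
elim: m => [|m IH] w a Ha Hl Hm.
  have := path_bound Ha; lia.
case: (boolP [exists y, e w y]) => [/existsP [y Hy]|Hn].
  have Ha' : path e rho (rcons a y) by rewrite rcons_path Ha Hl Hy.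
  have [s' [q [Hs Hq Hlq]]] := IH y (rcons a y) Ha' (last_rcons _ _ _)
     ltac:(rewrite size_rcons; have := path_bound Ha'; rewrite size_rcons; lia).
  by exists s', (y :: q); split => //=; rewrite Hy.
exists w, [::]; split => // y; apply/negP => Hy.
by move/existsP: Hn; apply; exists y.
Qed.

End Aux.
Arguments dist_size {T e rho} Ht {p w k}.
Arguments dist_of_path {T e rho} Ht {p w}.
Arguments sink_below {T e rho} Ht m {w a}.
Arguments path_take {T e rho} p i.

Theorem mainTheorem9 (T : finType) (e : rel T) (rho : T) (R : seq nat)
    (s : T) (ds : nat) :
  directed_tree e rho ->
  (forall r, r \in R -> 0 < r) ->
  (exists phi : nat -> T, burns e R phi) ->
  sink e s ->
  dist_is e rho s ds ->
  (forall s' ds', sink e s' -> dist_is e rho s' ds' -> ds' <= ds) ->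
  ds <= \max_(r <- R) r - 1 \/
  exists phi : nat -> T, burns e R phi /\
    exists2 r, r \in R & dist_is e (phi r) s (r - 1).
Proof.
move=> Ht Hpos [phi Hphi] Hs Hds Hmax.
have Hconn := Ht.2.2.
have [r rR [p0 [Hp0 Hl0 Hsz0]]] := Hphi s.
set u := phi r in Hp0 Hl0.
have /connectP [a Ha Hla] := Hconn u.
set P := a ++ p0.
have HP : path e rho P by rewrite cat_path Ha -Hla Hp0.
have HlP : last rho P = s by rewrite last_cat -Hla.
have HsP : size P = ds := dist_size Ht HP HlP Hds.
have HsP' : size a + size p0 = ds by rewrite -HsP size_cat.
case: (leqP (r - 1) ds) => Hrd; last first.
  left; have HM : r <= \max_(i <- R) i by exact: (@leq_bigmax_seq _ R xpredT (fun i => i) r rR isT). lia.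
right.
set k := ds - (r - 1).
have Hk : k <= size a by lia.
set v := last rho (take k P).
have EtP : take k P = take k a by rewrite /P takel_cat.
exists (fun x => if x == r then v else phi x); split; last first.
  exists r => //; rewrite eqxx; split.
    exists (drop k P); split.
    - by move: HP; rewrite -{1}(cat_take_drop k P) cat_path => /andP[].
    - by rewrite -HlP -{2}(cat_take_drop k P) last_cat.
    - rewrite size_drop; lia.
  move=> j Hj [q [Hq Hlq Hszq]].
  have Hq' : path e rho (take k P ++ q) by rewrite cat_path path_take.
  have := @dist_size _ _ _ Ht _ s _ Hq' ltac:(by rewrite last_cat) Hds.
  rewrite size_cat size_takel; lia.
move=> w; have [r' r'R [q [Hq Hlq Hszq]]] := Hphi w.
case: (eqVneq r' r) => [Er|ne]; last first.
  by exists r' => //; rewrite (negbTE ne); exists q.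
subst r'; exists r => //; rewrite eqxx.
(* size q <= size p0 *)
have Haq : path e rho (a ++ q) by rewrite cat_path Ha -Hla.
have [s' [q' [Hs' Hq' Hlq']]] := @sink_below _ _ _ Ht (#|T| - size (a ++ q)) w _ Haq
   ltac:(by rewrite last_cat -Hla) (leqnn _).
have Hall : path e rho (a ++ q ++ q') by rewrite cat_path Ha -Hla cat_path Hq Hlq Hq'.
have := Hmax _ _ Hs' (@dist_of_path _ _ _ Ht _ s' Hall ltac:(by rewrite !last_cat -Hla Hlq)).
rewrite !size_cat => Hle.
exists (drop k a ++ q); split.
- rewrite cat_path.
  move: Ha; rewrite -{1}(cat_take_drop k a) cat_path => /andP[_ H1].
  rewrite /v EtP H1 /=.
  have -> : last (last rho (take k a)) (drop k a) = u
    by rewrite Hla -last_cat cat_take_drop.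
  by [].
- rewrite last_cat.
  have -> : last v (drop k a) = u by rewrite /v EtP Hla -last_cat cat_take_drop.
  by [].
- rewrite size_cat size_drop; lia.
Qed.
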